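(* Let $Q$ be a commutative automorphic loop of nilpotency class $3$. Then $(a,(b,c,d),(e,f,g))=((a,b,c),d,(e,f,g))=((a,b,c),(d,e,f),g)=1$ for every $a,b,c,d,e,f,g\in Q$.
   Context: A loop is a set with a binary operation such that all left and right translations $L_a:b\mapsto ab$, $R_a:b\mapsto ba$ are bijections and there is a two-sided identity $1$. The inner mapping group is the stabilizer of $1$ in the group generated by all translations; $Q$ is automorphic if all inner mappings are automorphisms. The associator $(a,b,c)$ is defined by $(ab)c=(a(bc))(a,b,c)$. The center $Z(Q)$ is the set of elements fixed by all inner mappings; $Z_0=1$, $Z_{i+1}(Q)$ is the preimage of $Z(Q/Z_i(Q))$, and $Q$ has nilpotency class $n$ if $Z_{n-1}(Q)\neq Q=Z_n(Q)$. *)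

(* Defs.v *)
From mathcomp Require Import ssreflect ssrfun.

Set Implicit Arguments.
Unset Strict Implicit.

Section LoopDefs.
Variables (T : Type) (mul : T -> T -> T) (one : T).

Definition Ltr (a : T) : T -> T := fun b => mul a b.
Definition Rtr (a : T) : T -> T := fun b => mul b a.

Definition is_loop : Prop :=
  (forall a, bijective (Ltr a)) /\ (forall a, bijective (Rtr a)) /\
  (forall x, mul one x = x) /\ (forall x, mul x one = x).

Inductive mlt : (T -> T) -> Prop :=
  | mlt_id : mlt id
  | mlt_L f a : mlt f -> mlt (Ltr a \o f)
  | mlt_R f a : mlt f -> mlt (Rtr a \o f)
  | mlt_Linv f a g : mlt f -> cancel (Ltr a) g -> cancel g (Ltr a) -> mlt (g \o f)
  | mlt_Rinv f a g : mlt f -> cancel (Rtr a) g -> cancel g (Rtr a) -> mlt (g \o f).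

Definition inner (f : T -> T) : Prop := mlt f /\ f one = one.

(* Automorphic loop: every inner mapping is an automorphism (inner mappings
   are bijections, so it suffices that they are homomorphisms). *)
Definition automorphic : Prop :=
  forall f, inner f -> forall x y, f (mul x y) = mul (f x) (f y).

Definition commutative_loop : Prop := forall x y, mul x y = mul y x.

(* x and y lie in the same left coset of N : x N = y N (for normal N this is
   the congruence defining Q/N). *)
Definition cong (N : T -> Prop) (x y : T) : Prop := exists n, N n /\ x = mul y n.

(* Z_0 = 1 and Z_{i+1} = preimage of Z(Q/Z_i), where
   the center of a loop is the set of elements fixed by all inner mappings.
   The inner mappings of Q/N are exactly the maps induced by the f in Mlt(Q)
   with f(1) in N, so  a N  is in Z(Q/N)  iff  f(a) N = a N  for all such f.
   For i = 0 this gives Z_1 = Z(Q) = {a | f a = a for all inner f}. *)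
Fixpoint Zser (i : nat) : T -> Prop :=
  match i with
  | O => fun a => a = one
  | S i => fun a => forall f, mlt f -> Zser i (f one) -> cong (Zser i) (f a) a
  end.

Definition nilpotency_class (n : nat) : Prop :=
  (forall a, Zser n a) /\ ~ (forall a, Zser (Nat.pred n) a).

(* Associator (a,b,c): (ab)c = (a(bc)) (a,b,c); [ldiv x y] is x\y. *)
Definition assoc (ldiv : T -> T -> T) (a b c : T) : T :=
  ldiv (mul a (mul b c)) (mul (mul a b) c).

End LoopDefs.

(* Main.v *)
Require Import Defs.
From mathcomp Require Import ssreflect ssrfun.

Theorem lemma2p6 (T : Type) (mul : T -> T -> T) (one : T) (ldiv : T -> T -> T)
  (hloop : is_loop mul one)
  (hldiv : forall x y, mul x (ldiv x y) = y)
  (hcomm : commutative_loop mul)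
  (haut : automorphic mul one)
  (hcl : nilpotency_class mul one 3) :
  forall a b c d e f g : T,
    assoc mul ldiv a (assoc mul ldiv b c d) (assoc mul ldiv e f g) = one /\
    assoc mul ldiv (assoc mul ldiv a b c) d (assoc mul ldiv e f g) = one /\
    assoc mul ldiv (assoc mul ldiv a b c) (assoc mul ldiv d e f) g = one.
Proof.
case: hloop => hL [_ [h1x hx1]].
have cancL : forall x y z, mul x y = mul x z -> y = z.
  move=> x y z E; case: (hL x) => gi hgi _.
  by rewrite -[y]hgi -[z]hgi /Ltr E.
have divK : forall x y, ldiv x (mul x y) = y by move=> x y; apply: (cancL x); rewrite hldiv.
have divU : forall x y z, mul x y = z -> ldiv x z = y by move=> x y z <-; apply: divK.
have divv : forall x, ldiv x x = one by move=> x; apply: divU; apply: hx1.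
have cancR : forall x y z, mul y x = mul z x -> y = z.
  by move=> x y z; rewrite (hcomm y x) (hcomm z x) => /cancL.
have mltLL : forall x y, mlt mul (fun w => ldiv (mul x y) (mul x (mul y w))).
  move=> x y.
  exact: (mlt_Linv (mlt_L x (mlt_L y (mlt_id mul))) (divK (mul x y)) (hldiv (mul x y))).
have inLL : forall x y, inner mul one (fun w => ldiv (mul x y) (mul x (mul y w))).
  by move=> x y; split; [exact: mltLL | rewrite /= hx1 divv].
pose IZ k := forall f, inner mul one f -> f k = k.
have ZA : forall k x y, IZ k -> mul x (mul y k) = mul (mul x y) k.
  move=> k x y Hk; have /= E := Hk _ (inLL x y).
  have E' : mul (mul x y) (ldiv (mul x y) (mul x (mul y k))) = mul (mul x y) k by rewrite E.
  by rewrite hldiv in E'.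
have ZM : forall k1 k2, IZ k1 -> IZ k2 -> IZ (mul k1 k2).
  by move=> k1 k2 H1 H2 h Hh; rewrite (haut h Hh) H1 // H2.
have ZD : forall k1 k2, IZ k1 -> IZ k2 -> IZ (ldiv k1 k2).
  move=> k1 k2 H1 H2 h Hh.
  have -> : h (ldiv k1 k2) = ldiv (h k1) (h k2).
    by apply/esym/divU; rewrite -(haut h Hh) hldiv.
  by rewrite H1 // H2.
have ZS : forall k1 k2 x, IZ k1 -> IZ k2 -> mul (mul x k1) k2 = mul (mul x k2) k1.
  by move=> k1 k2 x H1 H2; rewrite -(ZA k2 x k1 H2) -(ZA k1 x k2 H1) (hcomm k1 k2).
have ZS' : forall k x m, IZ k -> mul (mul x m) k = mul (mul x k) m.
  by move=> k x m Hk; rewrite (hcomm (mul x k) m) (ZA k m x Hk) (hcomm m x).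
have Z1 : IZ one by move=> h Hh; exact: Hh.2.
have Zs1 : forall k, Zser mul one 1 k -> IZ k.
  move=> k Hk h Hh; case: Hh => Hm H1.
  have := Hk h Hm H1. case=> n [En E].
  by rewrite E; change (n = one) in En; rewrite En hx1.
have Zs1one : Zser mul one 1 one.
  by move=> h _ H1; exists one; split=> //; rewrite H1 hx1.
have Zs2one : Zser mul one 2 one.
  by move=> h _ H1; exists (h one); split=> //; rewrite h1x.
pose Cz n := forall y w, exists k, IZ k /\ mul y (mul n w) = mul (mul (mul y w) n) k.
have Zs2C : forall n, Zser mul one 2 n -> Cz n.
  move=> n Hn y w.
  have H1 : Zser mul one 1 ((fun w0 => ldiv (mul y w) (mul y (mul w w0))) one).
    by rewrite /= hx1 divv.
  have [k [Hk /= E]] := Hn _ (mltLL y w) H1.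
  exists k; split; first exact: Zs1.
  rewrite (hcomm n w) -(hldiv (mul y w) (mul y (mul w n))) E ZA //; exact: Zs1.
have Zs3 := hcl.1.
have StepA : forall a b c, Cz (assoc mul ldiv a b c).
  move=> a b c.
  have H2 : Zser mul one 2 ((fun w0 => ldiv (mul a b) (mul a (mul b w0))) one).
    by rewrite /= hx1 divv.
  have [n [Hn /= E]] := Zs3 c _ (mltLL a b) H2.
  have Cn := Zs2C n Hn.
  set p := mul a (mul b c); set q := mul (mul a b) c.
  set u := assoc mul ldiv a b c.
  have pu : mul p u = q by rewrite /u /assoc hldiv.
  have Ep : p = mul (mul a b) (mul c n) by rewrite -E hldiv.
  have [k1 [Hk1 E1]] := Cn (mul a b) c.
  have [k2 [Hk2 E2]] := Cn p u.
  set t := ldiv k2 k1.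
  have Ht : IZ t by apply: (ZD).
  have Eun : mul (mul u n) t = one.
    apply: (cancL p); rewrite hx1 ZA // (hcomm u n) E2 -ZA // hldiv.
    by rewrite /t hldiv -E1 (hcomm n c) -Ep.
  set m := mul n t.
  have um : mul u m = one by rewrite /m ZA.
  have Cm : Cz m.
    move=> y w; have [k [Hk Ek]] := Cn y w.
    exists k; split=> //.
    have -> : mul m w = mul (mul n w) t by rewrite /m (hcomm (mul n t) w) ZA // (hcomm w n).
    by rewrite ZA // Ek /m ZA // ZS.
  move=> y w.
  have [k3 [Hk3 E3]] := Cm y (mul u w).
  have [k5 [Hk5 E5]] := Cm w u.
  have [k6 [Hk6 E6]] := Cm (mul y w) u.
  have mu : mul m u = one by rewrite hcomm.
  rewrite mu hx1 in E5; rewrite mu hx1 in E6.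
  set A := mul y (mul u w) in E3 *; set B := mul (mul y w) u in E6 *.
  have Ew : w = mul (mul (mul u w) m) k5 by rewrite {1}E5 (hcomm w u).
  have EK : mul (mul A (mul k3 k5)) m = mul (mul B k6) m.
    rewrite -(ZS' (mul k3 k5) A m (ZM _ _ Hk3 Hk5)) (ZA k5 (mul A m) k3 Hk5) -E3 (hcomm m (mul u w)) -(ZA k5 y _ Hk5) -Ew -(ZS' k6 B m Hk6) -E6 ?hx1.
    done.
  have AK := cancR _ _ _ EK.
  exists (mul k6 (ldiv (mul k3 k5) one)); split; first by apply: (ZM) => //; apply: (ZD); [exact: (ZM) | exact: Z1].
  rewrite ZA; last by apply: (ZD); [exact: (ZM) | exact: Z1].
  by rewrite -AK -ZA ?hldiv ?hx1 //; apply: (ZD); [exact: (ZM) | exact: Z1].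
have StepC : forall u, Cz u -> forall x w, IZ (assoc mul ldiv x u w) /\ IZ (assoc mul ldiv u x w).
  move=> u Cu x w.
  have [k1 [Hk1 E1]] := Cu w x.
  have [k2 [Hk2 E2]] := Cu x w.
  have Exu : mul (mul x u) w = mul (mul (mul x w) u) k1.
    by rewrite (hcomm (mul x u) w) (hcomm x u) E1 (hcomm w x).
  split.
    rewrite /assoc Exu E2.
    have -> : ldiv (mul (mul (mul x w) u) k2) (mul (mul (mul x w) u) k1) = ldiv k2 k1.
      by apply: divU; rewrite -ZA ?hldiv //; apply: (ZD).
    exact: (ZD).
  rewrite /assoc (hcomm (mul u x) w) E1 (hcomm u (mul x w)) (hcomm x w) divK //.
have StepB : forall x y, (forall w, IZ (assoc mul ldiv x y w)) ->
    forall e f g, assoc mul ldiv x y (assoc mul ldiv e f g) = one.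
  move=> x y Hh.
  pose h w := assoc mul ldiv x y w.
  have key : forall w, mul (mul x y) w = mul x (mul y (mul w (h w))).
    by move=> w; rewrite (ZA (h w) y w (Hh w)) (ZA (h w) x (mul y w) (Hh w)) /h /assoc hldiv.
  pose psi w := ldiv y (ldiv x (mul (mul x y) w)).
  have mpsi : mlt mul psi.
    exact: (mlt_Linv (mlt_Linv (mlt_L (mul x y) (mlt_id mul)) (divK x) (hldiv x)) (divK y) (hldiv y)).
  have ipsi : inner mul one psi by split=> //; rewrite /psi hx1 divK divv.
  have Epsi : forall w, psi w = mul w (h w) by move=> w; rewrite /psi key !divK.
  have hom : forall w1 w2, h (mul w1 w2) = mul (h w1) (h w2).
    move=> w1 w2; apply: (cancL (mul w1 w2)).
    rewrite -Epsi (haut _ ipsi) !Epsi ZA // (hcomm (mul w1 (h w1)) w2) ZA //.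
    by rewrite (hcomm w2 w1) -ZA.
  move=> e f g.
  set v := assoc mul ldiv e f g.
  have Pv : mul (mul e (mul f g)) v = mul (mul e f) g by rewrite /v /assoc hldiv.
  have := congr1 h Pv; rewrite !hom => Ev.
  apply: (cancL (mul (h e) (mul (h f) (h g)))).
  change (mul (mul (h e) (mul (h f) (h g))) (h v) = mul (mul (h e) (mul (h f) (h g))) one).
  by rewrite Ev hx1 (ZA (h g) (h e) (h f) (Hh g)).
move=> a b c d e f g; split; [|split].
- apply: StepB => w; exact: (StepC _ (StepA b c d) a w).1.
- apply: StepB => w; exact: (StepC _ (StepA a b c) d w).2.
- have Eg := StepB g (assoc mul ldiv d e f) (fun w => (StepC _ (StepA d e f) g w).1) a b c.
  set u := assoc mul ldiv a b c in Eg *; set v := assoc mul ldiv d e f in Eg *.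
  have E : mul (mul g v) u = mul g (mul v u).
    by rewrite -(hldiv (mul g (mul v u)) (mul (mul g v) u)); move: Eg; rewrite /assoc => ->; rewrite hx1.
  rewrite /assoc (hcomm (mul u v) g) (hcomm u v) -E (hcomm (mul g v) u) (hcomm g v).
  exact: divv.
Qed.
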